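(* Let $n\ge1$. If $n\notin\{2^m-1,2^m,2^m+1\}$ for every $m\ge1$, then the maximally balanced tree $T^{mb}_n$ is not isomorphic to the GFB tree with $n$ leaves; in particular there are at least two non-isomorphic trees $T\in\mathcal{T}_n$ with $\mathcal{C}(T)=c_n$. If $n\in\{2^m-1,2^m,2^m+1\}$ for some $m\ge1$, then there is exactly one tree $T\in\mathcal{T}_n$ with $\mathcal{C}(T)=c_n$.
   Context: Bifurcating trees: rooted trees in which every internal node has exactly two children, considered up to isomorphism; $\mathcal{T}_n$ is the set of such trees with $n$ leaves. For a node $w$, $\kappa_T(w)$ is its number of descendant leaves. The Colless index is $\mathcal{C}(T)=\sum_{v}|\kappa_T(v_1)-\kappa_T(v_2)|$, summed over internal nodes $v$ with children $v_1,v_2$; $c_n=\min\{\mathcal{C}(T):T\in\mathcal{T}_n\}$. $T^{mb}_n$ is the unique tree in $\mathcal{T}_n$ in which at every internal node the numbers of descendant leaves of the two children differ by at most 1. GFB trees: start with a multiset of $n$ single-node trees; while the multiset has more than one tree, remove a tree $u$ with the minimum number of leaves, then remove a tree $v$ with the minimum number of leaves among the remaining trees, and insert the tree consisting of a new root whose two children are the roots of $u$ and $v$; the final tree is the GFB tree with $n$ leaves (it is unique up to isomorphism). *)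

(* Defs.v *)
From mathcomp Require Import all_boot.
From Stdlib Require Import Permutation.
Set Implicit Arguments. Unset Strict Implicit. Unset Printing Implicit Defensive.

(* Rooted bifurcating trees (ordered representation); trees "up to
   isomorphism" are handled via the relation [tree_iso] below. *)
Inductive tree : Type :=
| Leaf : tree
| Node : tree -> tree -> tree.

Fixpoint leaves (t : tree) : nat :=
  match t with Leaf => 1 | Node a b => leaves a + leaves b end.

Definition absdiff (a b : nat) : nat := (a - b) + (b - a).

Fixpoint colless (t : tree) : nat :=
  match t with
  | Leaf => 0
  | Node a b => absdiff (leaves a) (leaves b) + colless a + colless b
  end.

Inductive tree_iso : tree -> tree -> Prop :=
| iso_leaf : tree_iso Leaf Leaf
| iso_node a b a' b' : tree_iso a a' -> tree_iso b b' ->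
    tree_iso (Node a b) (Node a' b')
| iso_swap a b a' b' : tree_iso a b' -> tree_iso b a' ->
    tree_iso (Node a b) (Node a' b').

Definition colless_minimal (n : nat) (t : tree) : Prop :=
  leaves t = n /\ forall t', leaves t' = n -> colless t <= colless t'.

Fixpoint max_balanced (t : tree) : Prop :=
  match t with
  | Leaf => True
  | Node a b => absdiff (leaves a) (leaves b) <= 1 /\
                max_balanced a /\ max_balanced b
  end.

(* A run of the GFB algorithm from the multiset s (a list taken up to
   permutation) ending with the single tree t. *)
Inductive gfb_run : seq tree -> tree -> Prop :=
| gfb_done t : gfb_run [:: t] t
| gfb_step s u v r t :
    Permutation s (u :: v :: r) ->
    (forall w, List.In w (v :: r) -> leaves u <= leaves w) ->
    (forall w, List.In w r -> leaves v <= leaves w) ->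
    gfb_run (Node u v :: r) t ->
    gfb_run s t.

Definition gfb_tree (n : nat) (t : tree) : Prop := gfb_run (nseq n Leaf) t.

(* Main.v *)
Require Import Defs.
From mathcomp Require Import all_boot.
From mathcomp Require Import zify.
From Stdlib Require Import Permutation.
Set Implicit Arguments. Unset Strict Implicit. Unset Printing Implicit Defensive.

Fixpoint mbf (f n : nat) : tree :=
  match f with
  | 0 => Leaf
  | f'.+1 => if n <= 1 then Leaf else Node (mbf f' (n - n %/ 2)) (mbf f' (n %/ 2))
  end.

Lemma mbf_stable f1 : forall f2 n, n <= f1 -> n <= f2 -> mbf f1 n = mbf f2 n.
Proof.
elim: f1 => [|f1 IH] [|f2] n h1 h2 /=.
- by [].
- by have -> : n <= 1 by lia.
- by have -> : n <= 1 by lia.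
- case: ifP => // /negbT; rewrite -ltnNge => Hn.
  by rewrite (IH f2 (n - n %/ 2)) ?(IH f2 (n %/ 2)) //; lia.
Qed.

Definition mb n := mbf n n.

Lemma mb_eq n : 2 <= n -> mb n = Node (mb (n - n %/ 2)) (mb (n %/ 2)).
Proof.
move=> h; rewrite /mb; case: n h => [|n] h //=.
have -> : (n.+1 <= 1) = false by lia.
by congr Node; apply: mbf_stable; lia.
Qed.

Lemma mb1 : mb 1 = Leaf. Proof. by []. Qed.

Lemma mb_eq2 h l : l <= h <= l + 1 -> 1 <= l -> mb (h + l) = Node (mb h) (mb l).
Proof.
move=> /andP [h1 h2] hl; rewrite mb_eq; last lia.
have -> : h + l - (h + l) %/ 2 = h by lia.
by have -> : (h + l) %/ 2 = l by lia.
Qed.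

Lemma mb_leaves n : 1 <= n -> leaves (mb n) = n.
Proof.
elim/ltn_ind: n => n IH hn.
case: (ltnP n 2) => h2.
  by have -> : n = 1 by lia.
rewrite mb_eq //= !IH; lia.
Qed.

Lemma mb_bal n : max_balanced (mb n).
Proof.
elim/ltn_ind: n => n IH.
case: (ltnP n 2) => h2.
  by case: n IH h2 => [|[|]].
rewrite mb_eq //=; rewrite !mb_leaves; try lia.
split; first by rewrite /absdiff; lia.
by split; apply IH; lia.
Qed.

Definition g n := colless (mb n).

Lemma g1 : g 1 = 0. Proof. by []. Qed.

Lemma g_rec2 h l : l <= h <= l + 1 -> 1 <= l -> g (h + l) = (h - l) + g h + g l.
Proof.
move=> hh hl; rewrite /g mb_eq2 //= !mb_leaves; try lia.
by rewrite /absdiff; lia.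
Qed.

Lemma halves a : exists a1 a2, a1 + a2 = a /\ a2 <= a1 <= a2 + 1.
Proof. by exists (a - a %/ 2), (a %/ 2); split; lia. Qed.

Lemma key n : forall a b, a + b = n -> 1 <= a -> 1 <= b ->
  g (a + b) <= g a + g b + absdiff a b.
Proof.
elim/ltn_ind: n => n IH a b Hn Ha Hb.
wlog hab : a b Ha Hb Hn / b <= a.
  move=> W; case: (leqP b a) => h; first by apply: W.
  have -> : a + b = b + a by lia.
  have -> : absdiff a b = absdiff b a by rewrite /absdiff; lia.
  rewrite (addnC (g a)); apply: W => //; lia.
rewrite /absdiff.
case: (eqVneq a b) => [<-|neq].
  by rewrite g_rec2 //; lia.
case: (eqVneq b 1) => [eb|nb].
  subst b.
  have [a1 [a2 [e1 e2]]] := halves a.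
  have ga : g a = (a1 - a2) + g a1 + g a2 by rewrite -e1 g_rec2 //; lia.
  have -> : a + 1 = (a2 + 1) + a1 by lia.
  rewrite g_rec2; try lia.
  have := IH (a2 + 1) ltac:(lia) a2 1 erefl ltac:(lia) erefl.
  rewrite g1 /absdiff; lia.
have [a1 [a2 [e1 e2]]] := halves a.
have [b1 [b2 [f1 f2]]] := halves b.
have ga : g a = (a1 - a2) + g a1 + g a2 by rewrite -e1 g_rec2 //; lia.
have gb : g b = (b1 - b2) + g b1 + g b2 by rewrite -f1 g_rec2 //; lia.
have i1 := IH (a1 + b2) ltac:(lia) a1 b2 erefl ltac:(lia) ltac:(lia).
have i2 := IH (a2 + b1) ltac:(lia) a2 b1 erefl ltac:(lia) ltac:(lia).
rewrite /absdiff in i1 i2.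
case: (leqP (a2 + b1) (a1 + b2)) => c.
  have -> : a + b = (a1 + b2) + (a2 + b1) by lia.
  rewrite g_rec2; lia.
have -> : a + b = (a2 + b1) + (a1 + b2) by lia.
rewrite g_rec2; lia.
Qed.
Lemma leaves_pos t : 1 <= leaves t.
Proof. elim: t => //= a ha b hb; lia. Qed.

Lemma key' a b : 1 <= a -> 1 <= b -> g (a + b) <= g a + g b + absdiff a b.
Proof. move=> ha hb; exact: (key erefl ha hb). Qed.

Lemma colless_ge t : g (leaves t) <= colless t.
Proof.
elim: t => //= a ha b hb.
have := key' (leaves_pos a) (leaves_pos b); lia.
Qed.

Lemma minimal_iff n t : colless_minimal n t <-> leaves t = n /\ colless t = g n.
Proof.
split.
- move=> [hl hm]; split => //.
  have hn : 1 <= n by rewrite -hl leaves_pos.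
  have := hm (mb n) (mb_leaves hn); have := colless_ge t; rewrite hl /g; lia.
- move=> [hl hc]; split => // t' ht'; have := colless_ge t'; rewrite ht' hc; lia.
Qed.

Lemma iso_leaves t u : tree_iso t u -> leaves t = leaves u.
Proof. elim => //= *; lia. Qed.

Lemma iso_bal t u : tree_iso t u -> max_balanced t -> max_balanced u.
Proof.
elim => //= a b a' b' h1 i1 h2 i2 [hd [m1 m2]].
- by rewrite -(iso_leaves h1) -(iso_leaves h2); split => //; split; auto.
- rewrite -(iso_leaves h1) -(iso_leaves h2); split; first by move: hd; rewrite /absdiff; lia.
  by split; auto.
Qed.

Lemma g_pow2 m : g (2 ^ m) = 0.
Proof.
elim: m => // m IH.
have hp := expn_gt0 2 m; rewrite /= in hp.
rewrite expnS (_ : 2 * 2 ^ m = 2 ^ m + 2 ^ m); last lia.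
rewrite g_rec2 ?IH; lia.
Qed.

Lemma g_add_pow2 j : forall x, 1 <= x -> 2 ^ j <= 2 * x -> x <= 2 * 2 ^ j ->
  g (x + 2 ^ j) = g x + absdiff x (2 ^ j).
Proof.
elim: j => [|j IH] x h1 h2 h3.
  rewrite expn0 in h2 h3 *.
  by case: x h1 h2 h3 => [|[|[|]]].
have hp := expn_gt0 2 j; rewrite /= in hp.
have hev : 2 ^ j = 1 \/ exists Q, 2 ^ j = 2 * Q.
  case: j {IH h2 h3} hp => [|j] hp; [by left | right; exists (2 ^ j); exact: expnS].
rewrite expnS in h2 h3 *.
set P := 2 ^ j in IH hev h2 h3 hp *.
case: (eqVneq x 1) => [ex|nx].
  subst x. have eP : P = 1 by lia.
  by rewrite eP.
have [x1 [x2 [e1 e2]]] := halves x.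
have gx : g x = (x1 - x2) + g x1 + g x2 by rewrite -e1 g_rec2 //; lia.
have hx2 : P <= 2 * x2 by case: hev => [|[Q]]; lia.
have i1 := IH x1 ltac:(lia) ltac:(lia) ltac:(lia).
have i2 := IH x2 ltac:(lia) ltac:(lia) ltac:(lia).
have -> : x + 2 * P = (x1 + P) + (x2 + P) by lia.
rewrite g_rec2; try lia.
rewrite i1 i2 gx /absdiff; lia.
Qed.

Lemma g_p1 m : 1 <= m -> g (2 ^ m + 1) = m.
Proof.
elim: m => // m IH _.
case: (posnP m) => [->|hm]; first by [].
have hp : 2 <= 2 ^ m by rewrite -{1}(expn1 2) leq_exp2l.
rewrite expnS (_ : 2 * 2 ^ m + 1 = (2 ^ m + 1) + 2 ^ m); last lia.
rewrite g_rec2 ?IH ?g_pow2; lia.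
Qed.

Lemma g_m1 m : 1 <= m -> g (2 ^ m - 1) = m - 1.
Proof.
elim: m => // m IH _.
case: (posnP m) => [->|hm]; first by [].
have hp : 2 <= 2 ^ m by rewrite -{1}(expn1 2) leq_exp2l.
rewrite expnS (_ : 2 * 2 ^ m - 1 = 2 ^ m + (2 ^ m - 1)); last lia.
rewrite g_rec2 ?IH ?g_pow2; lia.
Qed.

Lemma exp2_ge m : 1 <= m -> 2 * m <= 2 ^ m.
Proof.
case: m => // m _. rewrite expnS.
have := ltn_expl m (isT : 1 < 2); lia.
Qed.
Definition spec n := exists m, 1 <= m /\ [\/ n = 2 ^ m - 1, n = 2 ^ m | n = 2 ^ m + 1].

Lemma spec_pow m : spec (2 ^ m).
Proof.
case: m => [|m]; first by exists 1; split => //; apply: Or31.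
by exists m.+1; split => //; apply: Or32.
Qed.

Lemma spec_p1 m : spec (2 ^ m + 1).
Proof.
case: m => [|m]; first by exists 1; split => //; apply: Or32.
by exists m.+1; split => //; apply: Or33.
Qed.

Lemma spec_m1 m : 1 <= m -> spec (2 ^ m - 1).
Proof. by move=> hm; exists m; split => //; apply: Or31. Qed.

Lemma spec_cases n : spec n -> 2 <= n ->
  exists Q, [/\ spec Q, spec (Q + 1), 1 <= Q &
    [\/ n = 2 * Q, n = 2 * Q + 1 | spec (Q - 1) /\ 2 <= Q /\ n = 2 * Q - 1]].
Proof.
move=> [m [hm h]] hn.
have e : 2 ^ m = 2 * 2 ^ m.-1 by rewrite -expnS prednK.
have hp := expn_gt0 2 m.-1; rewrite /= in hp.
exists (2 ^ m.-1); split => //; [exact: spec_pow | exact: spec_p1 |].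
rewrite e in h.
case: h => hh.
- apply: Or33.
  have hm2 : 2 <= m.
    clear hp; case: m hm e hh hn => [|[|m]] //= _ _; rewrite expn0; lia.
  have hq : 2 <= 2 ^ m.-1 by rewrite -{1}(expn1 2) leq_exp2l //; lia.
  split; first by apply: spec_m1; lia.
  split; lia.
- by apply: Or31.
- by apply: Or32.
Qed.
Lemma split_spec n : spec n -> forall a b, a + b = n -> 1 <= a -> 1 <= b ->
  g a + g b + absdiff a b = g n -> absdiff a b <= 1.
Proof.
elim/ltn_ind: n => n IH hs a b Hn Ha Hb Heq.
wlog hab : a b Ha Hb Hn Heq / b <= a.
  move=> W; case: (leqP b a) => h; first by apply: W.
  have -> : absdiff a b = absdiff b a by rewrite /absdiff; lia.
  apply: W => //; try lia.
  by move: Heq; rewrite /absdiff; lia.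
rewrite /absdiff in Heq *.
case: (eqVneq a b) => [->|nab]; first lia.
have [m [hm hm']] := hs.
have e : 2 ^ m = 2 * 2 ^ m.-1 by rewrite -expnS prednK.
have hx := exp2_ge hm.
have [hpow|[Y hodd]] : n = 2 ^ m \/ exists Y, n = 2 * Y + 1.
  case: hm' => ->; [right; exists (2 ^ m.-1 - 1) | by left | right; exists (2 ^ m.-1)];
  have := expn_gt0 2 m.-1; rewrite /=; lia.
  move: Heq; rewrite hpow g_pow2; lia.
case: (eqVneq b 1) => [eb|nb].
  subst b; rewrite g1 in Heq.
  case: hm' => hn'.
  - move: Heq; rewrite hn' g_m1 //; lia.
  - lia.
  - have ga : g a = 0 by rewrite (_ : a = 2 ^ m) ?g_pow2 //; lia.
    move: Heq; rewrite hn' g_p1 // ga; lia.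
have [a1 [a2 [e1 e2]]] := halves a.
have [b1 [b2 [f1 f2]]] := halves b.
have ga : g a = (a1 - a2) + g a1 + g a2 by rewrite -e1 g_rec2 //; lia.
have gb : g b = (b1 - b2) + g b1 + g b2 by rewrite -f1 g_rec2 //; lia.
have i1 := @key' a1 b2 ltac:(lia) ltac:(lia).
have i2 := @key' a2 b1 ltac:(lia) ltac:(lia).
rewrite /absdiff in i1 i2.
have gn : g n = (a1 + b2 - (a2 + b1)) + (a2 + b1 - (a1 + b2)) + g (a1 + b2) + g (a2 + b1).
  case: (leqP (a2 + b1) (a1 + b2)) => c.
    rewrite (_ : n = (a1 + b2) + (a2 + b1)); last lia.
    rewrite g_rec2; lia.
  rewrite (_ : n = (a2 + b1) + (a1 + b2)); last lia.
  rewrite g_rec2; lia.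
have [Q [sQ sQ1 hQ hc]] := spec_cases hs ltac:(lia).
have sp : forall P, (P = a1 + b2 \/ P = a2 + b1) -> spec P.
  move=> P hP; case: hc => hc.
  - lia.
  - have [->|->] : P = Q \/ P = Q + 1 by lia.
    + exact: sQ.
    + exact: sQ1.
  - case: hc => [sQm [hQ2 hc]].
    have [->|->] : P = Q \/ P = Q - 1 by lia.
    + exact: sQ.
    + exact: sQm.
have j1 := IH (a1 + b2) ltac:(lia) (sp _ (or_introl erefl)) a1 b2 erefl
  ltac:(lia) ltac:(lia) ltac:(rewrite /absdiff; lia).
have j2 := IH (a2 + b1) ltac:(lia) (sp _ (or_intror erefl)) a2 b1 erefl
  ltac:(lia) ltac:(lia) ltac:(rewrite /absdiff; lia).
rewrite /absdiff in j1 j2; lia.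
Qed.

Lemma uniq_spec t : spec (leaves t) -> colless t = g (leaves t) ->
  tree_iso (mb (leaves t)) t.
Proof.
elim: t => [|l IHl r IHr] /= hs hc; first by rewrite mb1; constructor.
have hl := leaves_pos l; have hr := leaves_pos r.
have cl := colless_ge l; have cr := colless_ge r.
have k := key' hl hr.
have gl : colless l = g (leaves l) by lia.
have gr : colless r = g (leaves r) by lia.
have sp := split_spec hs erefl hl hr ltac:(lia).
rewrite /absdiff in sp.
have [Q [sQ sQ1 hQ hcs]] := spec_cases hs ltac:(lia).
have spl : spec (leaves l) /\ spec (leaves r).
  case: hcs => hcs.
  - by have [-> ->] : leaves l = Q /\ leaves r = Q by lia.
  - have [[-> ->]|[-> ->]] : (leaves l = Q + 1 /\ leaves r = Q) \/ (leaves l = Q /\ leaves r = Q + 1) by lia.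
    + by [].
    + by [].
  - case: hcs => [sQm [hQ2 hcs]].
    have [[-> ->]|[-> ->]] : (leaves l = Q /\ leaves r = Q - 1) \/ (leaves l = Q - 1 /\ leaves r = Q) by lia.
    + by [].
    + by [].
case: spl => sl sr.
case: (leqP (leaves r) (leaves l)) => c.
  rewrite mb_eq2; try lia.
  by apply: iso_node; [apply: IHl | apply: IHr].
rewrite addnC mb_eq2; try lia.
by apply: iso_swap; [apply: IHr | apply: IHl].
Qed.
Definition isp2 (n : nat) : bool := has (fun k => n == 2 ^ k) (iota 0 n.+1).

Lemma isp2E n : isp2 n -> exists k, n = 2 ^ k.
Proof. by move/hasP => [k _ /eqP ->]; exists k. Qed.

Lemma isp2_pow k : isp2 (2 ^ k).
Proof.
apply/hasP; exists k => //; rewrite mem_iota /= add0n ltnS ltnW //.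
exact: ltn_expl.
Qed.

Lemma pow2_between k x : isp2 x -> 2 ^ k <= x <= 2 ^ k.+1 -> x = 2 ^ k \/ x = 2 ^ k.+1.
Proof.
move=> /isp2E [j ->] /andP [h1 h2].
rewrite leq_exp2l // in h1; rewrite leq_exp2l // in h2.
have [->|->] : j = k \/ j = k.+1 by lia.
by left. by right.
Qed.

Definition Qroot t := match t with Leaf => True | Node a b => isp2 (leaves a) \/ isp2 (leaves b) end.

Definition np (w : tree) : bool := ~~ isp2 (leaves w).

Definition Inv (l : seq tree) := exists k,
  (forall w, List.In w l -> Qroot w /\ 2 ^ k <= leaves w <= 2 ^ k.+1) /\ count np l <= 1.

Lemma perm_count T (p : pred T) (l1 l2 : seq T) : Permutation l1 l2 -> count p l1 = count p l2.
Proof. elim => //= [x a b _ -> | x y a | a b c _ -> _ ->] //; lia. Qed.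

Lemma count_in T (p : pred T) w (r : seq T) : List.In w r -> p w <= count p r.
Proof. elim: r => //= x r IH [<-|h]; [lia | have := IH h; lia]. Qed.

Lemma count_0 T (p : pred T) (r : seq T) : (forall w, List.In w r -> ~~ p w) -> count p r = 0.
Proof.
elim: r => //= x r IH h.
by rewrite (negbTE (h x (or_introl erefl))) IH // => w hw; apply: h; right.
Qed.

Lemma inv_step l u v r : Permutation l (u :: v :: r) ->
  (forall w, List.In w (v :: r) -> leaves u <= leaves w) ->
  (forall w, List.In w r -> leaves v <= leaves w) -> Inv l -> Inv (Node u v :: r).
Proof.
move=> Hp Hu Hv [k [Hall Hc]].
have Hall' : forall w, List.In w (u :: v :: r) -> Qroot w /\ 2 ^ k <= leaves w <= 2 ^ k.+1.
  by move=> w hw; apply: Hall; apply: Permutation_in (Permutation_sym Hp) hw.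
rewrite (perm_count _ Hp) /= in Hc.
have es : 2 ^ k.+1 = 2 * 2 ^ k by rewrite expnS.
have es2 : 2 ^ k.+2 = 2 * 2 * 2 ^ k by rewrite !expnS mulnA.
have [_ /andP [u1 u2]] := Hall' u (or_introl erefl).
have [_ /andP [v1 v2]] := Hall' v (or_intror (or_introl erefl)).
have huv : leaves u <= leaves v := Hu v (or_introl erefl).
have Qn : Qroot (Node u v).
  rewrite /=; case: (boolP (isp2 (leaves u))) => pu; first by left.
  case: (boolP (isp2 (leaves v))) => pv; first by right.
  by move: Hc; rewrite /np pu pv.
case: (boolP ((leaves u == 2 ^ k) && (leaves v == 2 ^ k))) => E.
  case/andP: E => /eqP eu /eqP ev.
  exists k; split.
    move=> w /= [<-|hw]; last by apply: Hall'; right; right.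
    by split => //=; rewrite eu ev es; lia.
  have nn : np (Node u v) = false.
    by rewrite /np /= eu ev (_ : 2 ^ k + 2 ^ k = 2 ^ k.+1) ?isp2_pow //; lia.
  rewrite /= nn; lia.
have Hr : forall w, List.In w r -> leaves w = 2 ^ k.+1.
  move=> w hw.
  have hw1 := Hv w hw.
  have [_ /andP [w1 w2]] := Hall' w (or_intror (or_intror hw)).
  have cw := count_in np hw.
  case: (boolP (isp2 (leaves w))) => pw.
    case: (pow2_between pw (introT andP (conj w1 w2))) => // ew.
    have eu : leaves u = 2 ^ k by lia.
    have ev : leaves v = 2 ^ k by lia.
    by move: E; rewrite eu ev eqxx.
  have pv : isp2 (leaves v).
    apply/negPn/negP => pv; move: Hc cw; rewrite /np pv (negbTE pw) /=.
    by case: (~~ isp2 (leaves u)); rewrite /= ?add0n ?add1n //; case: (count _ _).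
  case: (pow2_between pv (introT andP (conj v1 v2))) => ev.
    have eu : leaves u = 2 ^ k by lia.
    by move: E; rewrite eu ev eqxx.
  have ew : leaves w = 2 ^ k.+1 by lia.
  by move: pw; rewrite ew isp2_pow.
exists k.+1; split.
  move=> w /= [<-|hw].
    by split => //=; lia.
  split; first by have [] := Hall' w (or_intror (or_intror hw)).
  by rewrite Hr // es2 es; lia.
rewrite /= (count_0 (p := np)); first by case: (np _).
by move=> w hw; rewrite /np Hr // isp2_pow.
Qed.

Lemma gfb_Q l t : gfb_run l t -> Inv l -> Qroot t.
Proof.
elim => [t' [k [H _]] | s u v r t' Hp Hu Hv _ IH Hi].
  exact: (H t' (or_introl erefl)).1.
by apply: IH; apply: inv_step Hi.
Qed.

Lemma inv_init n : Inv (nseq n Leaf).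
Proof.
exists 0; split.
  move=> w; elim: n => //= n IH [<-|h]; [by [] | exact: IH].
by rewrite count_0 // => w; elim: n => //= n IH [<-|h]; [by [] | exact: IH].
Qed.
Lemma iso_node_l a b t : tree_iso (Node a b) t -> exists a' b', t = Node a' b' /\
  ((leaves a = leaves a' /\ leaves b = leaves b') \/ (leaves a = leaves b' /\ leaves b = leaves a')).
Proof.
move=> h; inversion h; subst.
- by exists a', b'; split => //; left; split; apply: iso_leaves.
- by exists a', b'; split => //; right; split; apply: iso_leaves.
Qed.
Lemma part1a n : (forall m, 1 <= m -> [/\ n <> 2 ^ m - 1, n <> 2 ^ m & n <> 2 ^ m + 1]) ->
  forall tmb tg, leaves tmb = n -> max_balanced tmb -> gfb_tree n tg -> ~ tree_iso tmb tg.
Proof.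
move=> H tmb tg hl hb hg hi.
have Qt := gfb_Q hg (inv_init n).
case: tmb hl hb hi => [|a b] hl hb hi.
  by have [h _ _] := H 1 isT; apply: h; rewrite -hl.
have [a' [b' [et hab]]] := @iso_node_l _ _ _ hi.
rewrite et /= in Qt.
case: hb => hd _; rewrite /= in hl.
have [k hk] : exists k, leaves a = 2 ^ k \/ leaves b = 2 ^ k.
  case: hab => [[-> ->]|[-> ->]]; case: Qt => /isp2E [k hk]; exists k; by [left|right|right|left].
have [h1 h2 h3] := H k.+1 isT; rewrite expnS /= in h1 h2 h3.
move: hd; rewrite /absdiff; lia.
Qed.

Lemma mb_minimal n : 1 <= n -> colless_minimal n (mb n).
Proof. by move=> hn; apply/minimal_iff; rewrite mb_leaves. Qed.

Lemma part1b n : 1 <= n -> (forall m, 1 <= m -> [/\ n <> 2 ^ m - 1, n <> 2 ^ m & n <> 2 ^ m + 1]) ->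
  exists t1 t2, colless_minimal n t1 /\ colless_minimal n t2 /\ ~ tree_iso t1 t2.
Proof.
move=> hn H.
have [k1 k2 k3] := H 1 isT; rewrite /= in k1 k2 k3.
have := trunc_log_bounds (isT : 1 < 2) hn.
set k := trunc_log 2 n => /andP [b1 b2].
have hk : 1 <= k by case: (posnP k) b2 => [->|] //=; rewrite expn1; lia.
have e : 2 ^ k = 2 * 2 ^ k.-1 by rewrite -expnS prednK.
have [h1 h2 h3] := H k hk.
have [h4 _ _] := H k.+1 isT; rewrite expnS in h4.
rewrite expnS in b2.
have hp := expn_gt0 2 k.-1; rewrite /= in hp.
exists (mb n).
case: (leqP n (3 * 2 ^ k.-1)) => c.
  exists (Node (mb (n - 2 ^ k.-1)) (mb (2 ^ k.-1))).
  have ga := @g_add_pow2 k.-1 (n - 2 ^ k.-1) ltac:(lia) ltac:(lia) ltac:(lia).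
  rewrite (_ : n - 2 ^ k.-1 + 2 ^ k.-1 = n) in ga; last lia.
  split; first exact: mb_minimal.
  split.
    apply/minimal_iff; rewrite /= !mb_leaves; try lia.
    split; first lia.
    by rewrite ga; have := g_pow2 k.-1; rewrite /g; lia.
  move=> /iso_bal /(_ (mb_bal n)) /= [].
  rewrite !mb_leaves /absdiff; lia.
exists (Node (mb (2 ^ k)) (mb (n - 2 ^ k))).
have ga := @g_add_pow2 k (n - 2 ^ k) ltac:(lia) ltac:(lia) ltac:(lia).
rewrite (_ : n - 2 ^ k + 2 ^ k = n) in ga; last lia.
split; first exact: mb_minimal.
split.
  apply/minimal_iff; rewrite /= !mb_leaves; try lia.
  split; first lia.
  by rewrite ga; have := g_pow2 k; rewrite /g /absdiff; lia.
move=> /iso_bal /(_ (mb_bal n)) /= [].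
rewrite !mb_leaves /absdiff; lia.
Qed.

Theorem corollary7 (n : nat) (hn : 1 <= n) :
  ((forall m, 1 <= m -> [/\ n <> 2 ^ m - 1, n <> 2 ^ m & n <> 2 ^ m + 1]) ->
     (forall tmb tg, leaves tmb = n -> max_balanced tmb -> gfb_tree n tg ->
        ~ tree_iso tmb tg) /\
     (exists t1 t2, colless_minimal n t1 /\ colless_minimal n t2 /\
        ~ tree_iso t1 t2)) /\
  ((exists m, 1 <= m /\ [\/ n = 2 ^ m - 1, n = 2 ^ m | n = 2 ^ m + 1]) ->
     exists t, colless_minimal n t /\
       forall t', colless_minimal n t' -> tree_iso t t').
Proof.
split.
  by move=> H; split; [apply: part1a | apply: part1b].
move=> hs; exists (mb n); split; first exact: mb_minimal.
move=> t' /minimal_iff [hl hc].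
rewrite -hl; apply: uniq_spec; rewrite hl //.
Qed.
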